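(* For every $n\ge 1$, $s(n)>0$ if and only if there exist an integer $j\ge 2$ and nonnegative integers $t_2,t_3,\dots,t_j$ with $t_j\ge 1$ such that $$p_n = 2^{t_2}3^{t_3}\cdots j^{t_j} + t_2+2t_3+\dots+(j-1)t_j+3 .$$ (That is: either $p_n=2^{t_2}+t_2+3$ for some $t_2\ge1$, or $p_n=2^{t_2}3^{t_3}+t_2+2t_3+3$ for some $t_2\ge0,t_3\ge1$, or $p_n=2^{t_2}3^{t_3}4^{t_4}+t_2+2t_3+3t_4+3$ for some $t_2,t_3\ge0,t_4\ge1$, and so on.)
   Context: $p_n$ denotes the $n$-th prime ($p_1=2$). For an integer $k\ge 3$, say that a positive integer $m$ is represented by $F_k$ if there exist integers $1\le x_1\le x_2\le\dots\le x_k$ with $x_1x_2\cdots x_k+x_1+\dots+x_k=m$. For $n\ge 1$, $s(n)$ is the smallest integer $k\ge 3$ such that $p_n+k-3$ is represented by $F_k$, and $s(n)=0$ if no such $k\ge 3$ exists. *)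

(* Defs.v *)
From mathcomp Require Import all_boot.
From mathcomp Require Import boolp.
Set Implicit Arguments. Unset Strict Implicit. Unset Printing Implicit Defensive.

Lemma next_prime_ex m : exists p, (m < p) && prime p.
Proof. by case: (prime_above m) => p Hmp Hp; exists p; rewrite Hmp Hp. Qed.

Definition next_prime (m : nat) : nat := ex_minn (next_prime_ex m).

(* p_ n = the n-th prime, with p_ 1 = 2 (p_ 0 is a junk value, also 2). *)
Definition p_ (n : nat) : nat := iter n.-1 next_prime 2.

Definition represented (k m : nat) : Prop :=
  exists xs : seq nat,
    [/\ size xs = k, sorted leq xs, all (fun x => 0 < x) xs &
        \prod_(x <- xs) x + \sum_(x <- xs) x = m].

Definition s_good (n k : nat) : bool :=
  `[< 3 <= k /\ represented k (p_ n + k - 3) >].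

Definition s (n : nat) : nat :=
  match pselect (exists k, s_good n k) with
  | left H => ex_minn H
  | right _ => 0
  end.

(* Main.v *)
Require Import Defs.
From mathcomp Require Import all_boot.
From mathcomp Require Import boolp zify.

Lemma prime_iter m : prime (iter m next_prime 2).
Proof.
elim: m => [//|m _] /=.
rewrite /next_prime; case: ex_minnP => p /andP[_ Hp] _ //.
Qed.

Lemma prod_decomp j x : 0 < x <= j -> x = \prod_(2 <= i < j.+1) i ^ (x == i).
Proof.
move=> /andP[x0 xj].
have [x1|x2] := leqP x 1.
  have -> : x = 1 by lia.
  rewrite big1_seq // => i /andP[_]; rewrite mem_index_iota => /andP[i2 _].
  by have -> : (1 == i) = false by apply/eqP; lia.
have xin : x \in index_iota 2 j.+1 by rewrite mem_index_iota; lia.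
rewrite (bigD1_seq x) ?iota_uniq //= eqxx expn1 big1 ?muln1 // => i ix.
by rewrite eq_sym (negbTE ix).
Qed.

Lemma sum_decomp j x : 0 < x <= j ->
  x = 1 + \sum_(2 <= i < j.+1) (i - 1) * (x == i).
Proof.
move=> /andP[x0 xj].
have [x1|x2] := leqP x 1.
  have -> : x = 1 by lia.
  rewrite big1_seq // => i /andP[_]; rewrite mem_index_iota => /andP[i2 _].
  have -> : (1 == i) = false by apply/eqP; lia.
  by rewrite muln0.
have xin : x \in index_iota 2 j.+1 by rewrite mem_index_iota; lia.
rewrite (bigD1_seq x) ?iota_uniq //= eqxx muln1 big1; first lia.
by move=> i ix; rewrite eq_sym (negbTE ix) muln0.
Qed.

Lemma expn_sumseq (i : nat) (xs : seq nat) (f : nat -> nat) :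
  \prod_(x <- xs) i ^ f x = i ^ (\sum_(x <- xs) f x).
Proof.
elim: xs => [|x xs IH]; first by rewrite !big_nil.
by rewrite !big_cons IH expnD.
Qed.

Lemma max_in (xs : seq nat) : xs != [::] -> \max_(x <- xs) x \in xs.
Proof.
elim: xs => [//|x xs IH] _.
rewrite big_cons in_cons.
case: xs IH => [|y ys] IH; first by rewrite big_nil maxn0 eqxx.
have := IH isT; case: (leqP x (\max_(z <- y :: ys) z)) => h.
  by move=> ->; rewrite orbT.
by rewrite eqxx.
Qed.

Lemma count_pos j (xs : seq nat) : j \in xs -> 0 < \sum_(x <- xs) (x == j).
Proof.
elim: xs => [//|x xs IH]; rewrite in_cons big_cons => /orP[/eqP->|h].
  by rewrite eqxx.
by have := IH h; lia.
Qed.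

Lemma nseq_prod n i : \prod_(x <- nseq n i) x = i ^ n.
Proof. by elim: n => [|n IH]; rewrite ?big_nil // big_cons IH expnS. Qed.
Lemma nseq_sum n i : \sum_(x <- nseq n i) x = i * n.
Proof. by elim: n => [|n IH]; rewrite ?big_nil ?muln0 // big_cons IH mulnS. Qed.

Lemma s_pos n : 0 < s n <-> exists k, s_good n k.
Proof.
rewrite /s; case: pselect => [H|H]; split => //.
- by move=> _; case: ex_minnP => k /asboolP [k3 _] _; lia.
Qed.

Theorem proposition5 (n : nat) (hn : 1 <= n) :
  0 < s n <->
  exists (j : nat) (t : nat -> nat),
    [/\ 2 <= j, 1 <= t j &
        p_ n = \prod_(2 <= i < j.+1) i ^ t i + \sum_(2 <= i < j.+1) (i - 1) * t i + 3].
Proof.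
have pr : prime (p_ n) by exact: prime_iter.
rewrite s_pos; split.
- move=> [k /asboolP [k3 [xs [sz _ /allP pos eq]]]].
  set j := \max_(x <- xs) x.
  have bnd : forall x, x \in xs -> 0 < x <= j.
    by move=> x xin; rewrite pos //=; exact: leq_bigmax_seq.
  have ne : xs != [::] by apply/eqP => e; rewrite e in sz; subst k.
  have jin : j \in xs by exact: max_in.
  pose t i := \sum_(x <- xs) (x == i).
  have Hp : \prod_(x <- xs) x = \prod_(2 <= i < j.+1) i ^ t i.
    rewrite (eq_big_seq (fun x => \prod_(2 <= i < j.+1) i ^ (x == i))); last first.
      by move=> x /bnd /prod_decomp.
    rewrite exchange_big /=; apply: eq_bigr => i _; exact: expn_sumseq.
  have Hs : \sum_(x <- xs) x = size xs + \sum_(2 <= i < j.+1) (i - 1) * t i.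
    rewrite (eq_big_seq (fun x => 1 + \sum_(2 <= i < j.+1) (i - 1) * (x == i))); last first.
      by move=> x /bnd /sum_decomp.
    rewrite big_split /= sum1_size exchange_big /=; congr (_ + _).
    by apply: eq_bigr => i _; rewrite big_distrr.
  rewrite Hp Hs sz in eq.
  have j2 : 2 <= j.
    case: (leqP 2 j) => // j1; exfalso.
    rewrite big_geq in eq; last lia.
    rewrite big_geq in eq; last lia.
    have e4 : p_ n = 4 by lia.
    by rewrite e4 in pr.
  exists j, t; split => //; first exact: count_pos.
  lia.
- move=> [j [t [j2 tj eq]]].
  set r := index_iota 2 j.+1.
  pose ys := nseq 3 1 ++ flatten [seq nseq (t i) i | i <- r].
  have Sz : size ys = 3 + \sum_(i <- r) t i.
    rewrite -sum1_size big_cat /= big_flatten big_map /= !big_cons big_nil.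
    congr (_ + _); apply: eq_bigr => i _; rewrite sum1_size size_nseq //.
  have Pr : \prod_(x <- ys) x = \prod_(i <- r) i ^ t i.
    rewrite big_cat /= big_flatten big_map /= !big_cons big_nil !mul1n.
    by apply: eq_bigr => i _; rewrite nseq_prod.
  have Sm : \sum_(x <- ys) x = 3 + \sum_(i <- r) i * t i.
    rewrite big_cat /= big_flatten big_map /= !big_cons big_nil.
    by congr (_ + _); apply: eq_bigr => i _; rewrite nseq_sum.
  have Ss : \sum_(i <- r) i * t i = \sum_(i <- r) (i - 1) * t i + \sum_(i <- r) t i.
    rewrite -big_split /=; apply: eq_big_seq => i; rewrite mem_index_iota => h.
    by rewrite mulnBl mul1n subnK // leq_pmull; lia.
  have Pos : all (fun x => 0 < x) ys.
    apply/allP => x; rewrite mem_cat => /orP[|/flatten_mapP [i]].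
      by rewrite mem_nseq => /andP[_ /eqP ->].
    rewrite mem_index_iota => /andP[i2 _]; rewrite mem_nseq => /andP[_ /eqP ->].
    lia.
  exists (3 + \sum_(i <- r) t i); apply/asboolP; split; first lia.
  exists (sort leq ys); split.
  + by rewrite size_sort.
  + exact: sort_sorted leq_total _.
  + by rewrite (perm_all _ (permEl (perm_sort _ _))).
  + rewrite (perm_big _ (permEl (perm_sort leq ys))) (perm_big _ (permEl (perm_sort leq ys))) /= Pr Sm Ss.
    rewrite eq -/r.
    move: (\prod_(i <- r) i ^ t i) (\sum_(i <- r) (i - 1) * t i) (\sum_(i <- r) t i) => A B C.
    lia.
Qed.
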